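(* Let $G$ be a finite abelian group. Then $\daleth^*(G) = \emptyset$ if and only if $|G|\le 2$. If $|G| \ge 3$, then $\daleth^*(G)$ is a finite interval of integers with $\min \daleth^*(G) = 3$.
   Context: For an abelian group $G$, $\mathcal B(G)$ is the monoid of zero-sum sequences over $G$: finite unordered sequences (with repetition) of elements of $G$ whose sum is $0$, with concatenation as operation. Its atoms are the minimal zero-sum sequences. For $A\in\mathcal B(G)$, $\mathsf L(A)$ is the set of all $k$ such that $A$ is a product of $k$ atoms. $\daleth^*(G) := \{\min(\mathsf L(UV)\setminus\{2\}) : U,V \text{ atoms of } \mathcal B(G),\ |\mathsf L(UV)|>1\}$. *)

(* Defs.v *)
From mathcomp Require Import all_boot all_algebra.
Set Implicit Arguments. Unset Strict Implicit. Unset Printing Implicit Defensive.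
Import GRing.Theory.
Local Open Scope ring_scope.

(* A (finite, unordered) sequence over a finite abelian group G is encoded by
   its multiplicity function G -> nat (an element of the free abelian monoid F(G)). *)
Definition fseq (G : finZmodType) := {ffun G -> nat}.

Definition sigma (G : finZmodType) (S : fseq G) : G := \sum_(g : G) g *+ S g.

Definition seq_len (G : finZmodType) (S : fseq G) : nat := (\sum_(g : G) S g)%N.

Definition subseqF (G : finZmodType) (T S : fseq G) : Prop := forall g, (T g <= S g)%N.

Definition concat (G : finZmodType) (S T : fseq G) : fseq G := [ffun g => (S g + T g)%N].

Definition concat_list (G : finZmodType) (s : seq (fseq G)) : fseq G :=
  [ffun g => (\sum_(U <- s) U g)%N].

Definition zero_sum (G : finZmodType) (S : fseq G) : Prop := sigma S = 0.

Definition atom (G : finZmodType) (U : fseq G) : Prop :=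
  [/\ seq_len U <> 0%N, zero_sum U &
      forall T : fseq G, subseqF T U -> seq_len T <> 0%N -> zero_sum T -> T = U].

Definition lengths (G : finZmodType) (A : fseq G) (k : nat) : Prop :=
  exists s : seq (fseq G), [/\ size s = k, (forall U, U \in s -> atom U) & concat_list s = A].

Definition daleth_star (G : finZmodType) (n : nat) : Prop :=
  exists U V : fseq G, [/\ atom U, atom V,
    (exists k1 k2, k1 <> k2 /\ lengths (concat U V) k1 /\ lengths (concat U V) k2) &
    [/\ lengths (concat U V) n, n <> 2%N &
        forall k, lengths (concat U V) k -> k <> 2%N -> (n <= k)%N]].

(* Main.v *)
Require Import Defs.
From mathcomp Require Import all_boot all_algebra.
From mathcomp Require Import fingroup cyclic.
From mathcomp Require Import zify.
From Stdlib Require Import Classical.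
Set Implicit Arguments. Unset Strict Implicit. Unset Printing Implicit Defensive.
Import GRing.Theory.

Section Aux.
Variable G : finZmodType.
Implicit Types S T U V W X Y A B : fseq G.
Implicit Types s t : seq (fseq G).

Definition delta (g : G) : fseq G := [ffun x => nat_of_bool (x == g)].
Definition fsub S T : fseq G := [ffun x => S x - T x].
Definition zfs : fseq G := [ffun _ => 0].
Definition dd (v w : G) : fseq G := concat (delta v) (delta w).
Definition mrg S (v w : G) : fseq G := concat (fsub S (dd v w)) (delta (v + w)%R).

Lemma fext S T : (forall x, S x = T x) -> S = T.
Proof. by move=> H; apply/ffunP. Qed.

Lemma concatE S T x : concat S T x = S x + T x. Proof. by rewrite ffunE. Qed.
Lemma fsubE S T x : fsub S T x = S x - T x. Proof. by rewrite ffunE. Qed.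
Lemma deltaE g x : delta g x = (x == g). Proof. by rewrite ffunE. Qed.
Lemma zfsE x : zfs x = 0. Proof. by rewrite ffunE. Qed.
Lemma ddE v w x : dd v w x = (x == v) + (x == w). Proof. by rewrite !ffunE. Qed.
Lemma mrgE S v w x : mrg S v w x = S x - ((x == v) + (x == w)) + (x == (v + w)%R).
Proof. by rewrite !ffunE. Qed.

Lemma concatC S T : concat S T = concat T S.
Proof. by apply: fext => x; rewrite !concatE addnC. Qed.

Lemma sigma_concat S T : sigma (concat S T) = (sigma S + sigma T)%R.
Proof. by rewrite /sigma -big_split; apply: eq_bigr => g _; rewrite ffunE mulrnDr. Qed.

Lemma seq_len_concat S T : seq_len (concat S T) = seq_len S + seq_len T.
Proof. by rewrite /seq_len -big_split; apply: eq_bigr => g _; rewrite ffunE. Qed.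

Lemma sigma_delta g : sigma (delta g) = g.
Proof.
rewrite /sigma (bigD1 g) //= big1 ?addr0; first by rewrite ffunE eqxx.
by move=> x /negbTE nx; rewrite ffunE nx.
Qed.

Lemma seq_len_delta g : seq_len (delta g) = 1.
Proof.
rewrite /seq_len (bigD1 g) //= big1 ?addn0; first by rewrite ffunE eqxx.
by move=> x /negbTE nx; rewrite ffunE nx.
Qed.

Lemma sigma_zfs : sigma zfs = 0%R.
Proof. by rewrite /sigma big1 // => g _; rewrite ffunE. Qed.
Lemma seq_len_zfs : seq_len zfs = 0.
Proof. by rewrite /seq_len big1 // => g _; rewrite ffunE. Qed.

Lemma fsub_split S T : subseqF T S -> S = concat (fsub S T) T.
Proof. by move=> H; apply: fext => x; rewrite concatE fsubE; have := H x; lia. Qed.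

Lemma sigma_fsub S T : subseqF T S -> sigma (fsub S T) = (sigma S - sigma T)%R.
Proof. by move=> H; rewrite {2}(fsub_split H) sigma_concat addrK. Qed.

Lemma seq_len_fsub S T : subseqF T S -> seq_len (fsub S T) = seq_len S - seq_len T.
Proof. by move=> H; rewrite {2}(fsub_split H) seq_len_concat addnK. Qed.

Lemma len0 S : seq_len S = 0 -> forall x, S x = 0.
Proof.
move=> H x; apply/eqP; move: H => /eqP; rewrite /seq_len sum_nat_eq0 => /forallP.
by move/(_ x).
Qed.

Lemma len0E S : seq_len S = 0 -> S = zfs.
Proof. by move=> H; apply: fext => x; rewrite zfsE (len0 H). Qed.

Lemma seq_len_le S T : subseqF T S -> seq_len T <= seq_len S.
Proof. by move=> H; apply: leq_sum => x _; apply: H. Qed.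

Lemma seq_len_lt S T : subseqF T S -> T <> S -> seq_len T < seq_len S.
Proof.
move=> H nTS; rewrite (fsub_split H) seq_len_concat.
case E: (seq_len (fsub S T)) => [|m]; last by lia.
exfalso; apply: nTS; apply: fext => x; have := len0 E x; rewrite fsubE.
have := H x; lia.
Qed.

Lemma len_pos S x : 0 < S x -> seq_len S <> 0.
Proof. by move=> Hx /len0 /(_ x); lia. Qed.

Lemma subseq_delta S x : 0 < S x -> subseqF (delta x) S.
Proof. by move=> H y; rewrite deltaE; case: eqP => [->|]. Qed.

Lemma exists_pos S : seq_len S <> 0 -> exists x, 0 < S x.
Proof.
move=> H; apply: NNPP => N; apply: H.
have -> : S = zfs by apply: fext => x; rewrite zfsE; apply: NNPP => nx; apply: N; exists x; lia.
exact: seq_len_zfs.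
Qed.

Lemma len1 S : seq_len S = 1 -> exists x, S = delta x.
Proof.
move=> H; have [x Hx] := exists_pos (S := S) ltac:(lia).
exists x; have Hd := subseq_delta Hx.
have := seq_len_fsub Hd; rewrite H seq_len_delta subnn => /len0 E.
apply: fext => y; have := E y; have := Hd y; rewrite fsubE; lia.
Qed.

Lemma atom_min U T : atom U -> subseqF T U -> seq_len T <> 0 -> zero_sum T -> T = U.
Proof. by case=> _ _ H; apply: H. Qed.

Lemma concat_list_nil : concat_list [::] = zfs :> fseq G.
Proof. by apply: fext => x; rewrite !ffunE big_nil. Qed.

Lemma concat_list_cons Y t : concat_list (Y :: t) = concat Y (concat_list t).
Proof. by apply: fext => x; rewrite !ffunE big_cons. Qed.

Lemma concat_list_cat s t : concat_list (s ++ t) = concat (concat_list s) (concat_list t).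
Proof. by apply: fext => x; rewrite !ffunE big_cat. Qed.

Lemma concat_list_perm s t : perm_eq s t -> concat_list s = concat_list t.
Proof. by move=> P; apply: fext => x; rewrite !ffunE; apply: perm_big. Qed.

Lemma lengths_zfs : lengths zfs 0.
Proof. by exists [::]; split => //; rewrite concat_list_nil. Qed.

Lemma lengths_atom U : atom U -> lengths U 1.
Proof.
move=> HU; exists [:: U]; split => //; first by move=> Y; rewrite inE => /eqP ->.
by rewrite concat_list_cons concat_list_nil; apply: fext => x; rewrite concatE zfsE addn0.
Qed.

Lemma lengths_cat A B k1 k2 : lengths A k1 -> lengths B k2 -> lengths (concat A B) (k1 + k2).
Proof.
move=> [s [<- Hs <-]] [t [<- Ht <-]]; exists (s ++ t); split.
- by rewrite size_cat.
- by move=> Y; rewrite mem_cat => /orP [/Hs|/Ht].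
- by rewrite concat_list_cat.
Qed.

Lemma lengths_pick s X : (forall Y, Y \in s -> atom Y) -> X \in s ->
  atom X /\ lengths (concat_list (rem X s)) (size s).-1 /\
  concat_list s = concat X (concat_list (rem X s)).
Proof.
move=> Hs Xs; have P := perm_to_rem Xs.
split; first exact: Hs.
split; last by rewrite (concat_list_perm P) concat_list_cons.
exists (rem X s); split => //.
- by rewrite size_rem.
- by move=> Y /mem_rem; apply: Hs.
Qed.

Lemma exists_mem s x : 0 < concat_list s x -> exists2 X, X \in s & 0 < X x.
Proof.
elim: s => [|Y t IH]; first by rewrite concat_list_nil zfsE.
rewrite concat_list_cons concatE.
case: (posnP (Y x)) => [Y0|Ypos]; last by move=> _; exists Y => //; rewrite inE eqxx.
rewrite Y0 add0n => /IH [X Xt HX]; exists X => //; by rewrite inE Xt orbT.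
Qed.

Lemma lengths_le A k : lengths A k -> k <= seq_len A.
Proof.
move=> [s [<- Hs <-]]; elim: s Hs => [|Y t IH] Hs /=; first by [].
rewrite concat_list_cons seq_len_concat.
have [HY _ _] := Hs Y (mem_head _ _).
have := IH (fun Z Zt => Hs Z (@mem_behead _ (Y :: t) Z Zt)); lia.
Qed.

Lemma atom_lengths V k : atom V -> lengths V k -> k = 1.
Proof.
move=> HV [s [<- Hs Es]]; case: s Hs Es => [|Y [|Z t]] Hs Es //.
- by case: HV => HV _ _; rewrite -Es concat_list_nil seq_len_zfs in HV.
- exfalso.
  have HY := Hs Y (mem_head _ _); have HZ : atom Z by apply: Hs; rewrite !inE eqxx orbT.
  move: Es; rewrite !concat_list_cons => Es.
  have YV : Y = V.
    case: HY => HY1 HY2 _; apply: (atom_min HV) => //.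
    by move=> x; rewrite -Es concatE; lia.
  case: HZ => HZ1 _ _; apply: HZ1.
  have := congr1 (@seq_len G) Es; rewrite YV !seq_len_concat; lia.
Qed.

Lemma factor_exists A : zero_sum A -> exists k, lengths A k.
Proof.
move: {2}(seq_len A) (leqnn (seq_len A)) => N; elim: N A => [|N IH] A HN HA.
  by exists 0; rewrite (len0E (S := A)); [exact: lengths_zfs | lia].
case: (classic (seq_len A = 0)) => [A0|A0].
  by exists 0; rewrite (len0E A0); exact: lengths_zfs.
case: (classic (atom A)) => [At|nAt]; first by exists 1; exact: lengths_atom.
have [T [TA T0 Tz TnA]] : exists T, [/\ subseqF T A, seq_len T <> 0, zero_sum T & T <> A].
  apply: NNPP => N1; apply: nAt; split => // T TA T0 Tz.
  by apply: NNPP => TnA; apply: N1; exists T.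
have l1 := seq_len_lt TA TnA.
have Hs := fsub_split TA.
have l2 : seq_len (fsub A T) < seq_len A by rewrite seq_len_fsub //; lia.
have [k1 H1] := IH T ltac:(lia) Tz.
have [k2 H2] : exists k, lengths (fsub A T) k.
  apply: IH; first lia.
  by rewrite /zero_sum sigma_fsub // HA Tz subrr.
by exists (k2 + k1); rewrite Hs; apply: lengths_cat.
Qed.

End Aux.


Section Merge.
Variable G : finZmodType.
Implicit Types S T U V W X Y A B R : fseq G.
Implicit Types s t : seq (fseq G).

Lemma sigma_dd (v w : G) : sigma (dd v w) = (v + w)%R.
Proof. by rewrite /dd sigma_concat !sigma_delta. Qed.
Lemma seq_len_dd (v w : G) : seq_len (dd v w) = 2.
Proof. by rewrite /dd seq_len_concat !seq_len_delta. Qed.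

Lemma sigma_merge S v w : subseqF (dd v w) S -> sigma (mrg S v w) = sigma S.
Proof. by move=> H; rewrite /mrg sigma_concat sigma_fsub // sigma_delta sigma_dd subrK. Qed.

Lemma seq_len_merge S v w : subseqF (dd v w) S -> seq_len (mrg S v w) = (seq_len S).-1.
Proof.
move=> H; rewrite /mrg seq_len_concat seq_len_fsub // seq_len_delta seq_len_dd.
have := seq_len_le H; rewrite seq_len_dd; lia.
Qed.

Lemma merge_atom W v w : atom W -> subseqF (dd v w) W -> atom (mrg W v w).
Proof.
move=> HW HD; have L2 := seq_len_le HD; rewrite seq_len_dd in L2.
split.
- by rewrite seq_len_merge //; lia.
- by rewrite /zero_sum sigma_merge //; case: HW.
move=> R HR R0 Rz.
case: (classic (forall x, R x <= W x - dd v w x)) => [Ha|Hb].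
  exfalso.
  have RW : subseqF R W by move=> x; have := Ha x; lia.
  have E := atom_min HW RW R0 Rz.
  have : seq_len R <= seq_len (fsub W (dd v w)) by apply: seq_len_le => x; rewrite fsubE; apply: Ha.
  by rewrite seq_len_fsub // seq_len_dd E; lia.
have [x Hx] : exists x, W x - dd v w x < R x.
  by apply: NNPP => N; apply: Hb => x; apply: NNPP => N2; apply: N; exists x; lia.
have Rx := HR x; rewrite mrgE ddE in Rx Hx.
have xc : x = (v + w)%R.
  by apply: NNPP => /eqP/negbTE nx; rewrite nx addn0 in Rx; lia.
subst x.
have Rc : 0 < R (v + w)%R by lia.
set R' := concat (fsub R (delta (v + w)%R)) (dd v w).
have R'W : subseqF R' W.
  move=> y; rewrite /R' concatE fsubE deltaE ddE.
  have := HR y; have := HD y; rewrite mrgE ddE.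
  by case: eqP => [->|_]; lia.
have R'z : zero_sum R'.
  by rewrite /zero_sum /R' sigma_concat sigma_fsub ?sigma_delta ?sigma_dd ?Rz ?add0r ?addNr //;
     apply: subseq_delta.
have R'0 : seq_len R' <> 0 by rewrite /R' seq_len_concat seq_len_dd; lia.
have E := atom_min HW R'W R'0 R'z.
apply: fext => y; have := congr1 (fun Z : fseq G => Z y) E; rewrite /R' /= concatE fsubE deltaE.
rewrite mrgE; rewrite ddE.
by case: eqP => [->|_] => H; lia.
Qed.

Lemma merge_concat X B v w : subseqF (dd v w) X ->
  mrg (concat X B) v w = concat (mrg X v w) B.
Proof.
move=> H; apply: fext => x; rewrite !mrgE !concatE.
rewrite fsubE ddE deltaE; have := H x; rewrite ddE; lia.
Qed.

Lemma lengths_merge A s X v w n :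
  size s = n -> (forall Y, Y \in s -> atom Y) -> concat_list s = A ->
  X \in s -> subseqF (dd v w) X -> lengths (mrg A v w) n.
Proof.
move=> Hn Hs HA Xs HD; have [HX [Hr E]] := lengths_pick Hs Xs.
rewrite -HA E merge_concat //.
have -> : n = 1 + (size s).-1 by rewrite -Hn; case: (s) Xs.
apply: lengths_cat => //; apply: lengths_atom; exact: merge_atom.
Qed.

Lemma count3 S v w t : (forall T, subseqF T S -> seq_len T <> 0 -> ~ zero_sum T) ->
  (forall Y, Y \in t -> atom Y) -> concat_list t = concat S (dd v w) -> size t <= 2.
Proof.
move=> Hz Ht Et; case: t Ht Et => [|Y1 [|Y2 [|Y3 r]]] Ht Et //.
exfalso.
have key : forall g, Y1 g + Y2 g + Y3 g <= S g + ((g == v) + (g == w)).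
  move=> g; have := congr1 (fun Z : fseq G => Z g) Et.
  rewrite /= !concat_list_cons !concatE ?ddE ?deltaE; lia.
have ex : forall Y, Y \in [:: Y1, Y2, Y3 & r] -> exists g, S g < Y g.
  move=> Y HY; apply: NNPP => N; have [Y0 Yz _] := Ht Y HY.
  apply: (Hz Y) => // g; apply: NNPP => N2; apply: N; exists g; lia.
have [g1 H1] := ex Y1 ltac:(by rewrite inE eqxx).
have [g2 H2] := ex Y2 ltac:(by rewrite !inE eqxx ?orbT).
have [g3 H3] := ex Y3 ltac:(by rewrite !inE eqxx ?orbT).
have vw : forall g, S g < Y1 g \/ S g < Y2 g \/ S g < Y3 g -> g = v \/ g = w.
  move=> g Hg; have := key g; case: eqP => [->|_]; first by left.
  case: eqP => [->|_]; first by right. lia.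
have /vw [] : S g1 < Y1 g1 \/ S g1 < Y2 g1 \/ S g1 < Y3 g1 by left.
all: have /vw [] : S g2 < Y1 g2 \/ S g2 < Y2 g2 \/ S g2 < Y3 g2 by right; left.
all: have /vw [] : S g3 < Y1 g3 \/ S g3 < Y2 g3 \/ S g3 < Y3 g3 by right; right.
all: move=> *; subst.
all: have kv := key v; have kw := key w; rewrite !eqxx in kv kw.
all: case: (eqVneq v w) => [E|nvw]; [subst; lia | rewrite (negbTE nvw) eq_sym (negbTE nvw) in kv kw; lia].
Qed.

Lemma lift_len A v w k : subseqF (dd v w) A -> lengths (mrg A v w) k ->
  lengths A k \/ lengths A k.+1.
Proof.
move=> HD [s [Hk Hs Es]].
set c := (v + w)%R.
have : 0 < concat_list s c by rewrite Es mrgE eqxx; lia.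
move=> /exists_mem [X Xs Xc].
have [HX [Hr E]] := lengths_pick Hs Xs.
set B := concat_list (rem X s) in Hr E.
set X' := concat (fsub X (delta c)) (dd v w).
have Xdc : subseqF (delta c) X by apply: subseq_delta.
have EA : A = concat X' B.
  rewrite Es in E.
  apply: fext => x; have := congr1 (fun Z : fseq G => Z x) E.
  rewrite /X' /c /= !concatE !fsubE !deltaE ?ddE.
  have := HD x; rewrite ddE.
  have := Xdc x; rewrite deltaE /c.
  by case: (eqVneq x (v + w)%R) => [->|_]; lia.
have zX' : zero_sum X'.
  rewrite /zero_sum /X' sigma_concat sigma_fsub // sigma_delta sigma_dd.
  by case: HX => _ -> _; rewrite add0r addNr.
have [j [t [Hj Ht Et]]] := factor_exists zX'.
have j2 : j <= 2.
  rewrite -Hj; apply: (@count3 (fsub X (delta c)) v w t _ Ht Et).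
  move=> T TS T0 Tz.
  have TX : subseqF T X by move=> x; have := TS x; rewrite fsubE; lia.
  have ETX := atom_min HX TX T0 Tz.
  have := seq_len_le TS; rewrite seq_len_fsub // seq_len_delta ETX.
  case: HX => HX0 _ _; lia.
have j0 : j <> 0.
  move=> j0; move: Hj; rewrite j0 => /eqP; rewrite size_eq0 => /eqP tnil.
  move: Et; rewrite tnil concat_list_nil => /(congr1 (@seq_len G)).
  by rewrite seq_len_zfs /X' seq_len_concat seq_len_dd; lia.
have sk : size s = (size s).-1.+1 by case: (s) Xs.
have LA : lengths A (j + (size s).-1).
  by rewrite EA; apply: lengths_cat => //; exists t.
case: (eqVneq j 1) => [j1|jn1].
  by left; rewrite -Hk sk; move: LA; rewrite j1.
by right; rewrite -Hk sk; have -> : (size s).-1.+2 = j + (size s).-1 by lia.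
Qed.

End Merge.


Section Main.
Variable G : finZmodType.
Implicit Types S T U V W X Y A B R : fseq G.
Implicit Types s t : seq (fseq G).

Definition lowb A n := forall k, lengths A k -> k <> 2 -> n <= k.

Lemma mem_le l Y : Y \in l -> subseqF Y (concat_list l).
Proof.
elim: l => [|Z l IH] //; rewrite inE concat_list_cons => /orP [/eqP -> x|/IH H x].
  by rewrite concatE; lia.
by rewrite concatE; have := H x; lia.
Qed.

Lemma not01 U V k : atom U -> atom V -> lengths (concat U V) k -> 2 <= k.
Proof.
move=> HU HV [s [<- Hs Es]]; case: s Hs Es => [|X [|Z t]] Hs Es //.
- case: HU => HU _ _; exfalso; apply: HU.
  have := congr1 (@seq_len G) Es; rewrite concat_list_nil seq_len_zfs seq_len_concat; lia.
- exfalso; rewrite concat_list_cons concat_list_nil in Es.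
  have EX : X = concat U V by rewrite -Es; apply: fext => x; rewrite concatE zfsE addn0.
  have HX := Hs X (mem_head _ _).
  have UX : U = X.
    case: HU => HU1 HU2 _; apply: (atom_min HX) => // x; rewrite EX concatE; lia.
  case: HV => HV1 _ _; apply: HV1.
  have := congr1 (@seq_len G) EX; rewrite seq_len_concat UX; lia.
Qed.

Lemma lengths2 U V : atom U -> atom V -> lengths (concat U V) 2.
Proof. by move=> HU HV; apply: (@lengths_cat _ U V 1 1); apply: lengths_atom. Qed.

Lemma daleth_of U V m : atom U -> atom V -> lengths (concat U V) m -> m <> 2 ->
  lowb (concat U V) m -> daleth_star G m.
Proof.
move=> HU HV Hm m2 Hl; exists U, V; split => //.
  by exists 2, m; split => //; [lia | split => //; apply: lengths2].
Qed.

Lemma lowb_merge U V v w n : atom U -> atom V -> subseqF (dd v w) V ->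
  lowb (concat U V) n -> lowb (concat U (mrg V v w)) n.-1.
Proof.
move=> HU HV HD Hl k Hk k2.
have HV' := merge_atom HV HD.
have k3 := not01 HU HV' Hk.
have E : concat U (mrg V v w) = mrg (concat U V) v w.
  by rewrite concatC (concatC U V) merge_concat.
have HD' : subseqF (dd v w) (concat U V) by move=> x; rewrite concatE; have := HD x; lia.
rewrite E in Hk; case: (lift_len HD' Hk) => H.
  by have := Hl k H k2; lia.
by have := Hl k.+1 H ltac:(lia); lia.
Qed.

Lemma atom_zero U : atom U -> 0 < U 0%R -> U = delta 0%R.
Proof.
move=> HU H0; symmetry; apply: (atom_min HU); first exact: subseq_delta.
- by rewrite seq_len_delta.
- by rewrite /zero_sum sigma_delta.
Qed.

Lemma concat_cancel X Y V : concat X Y = concat X V -> Y = V.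
Proof.
by move=> E; apply: fext => x; have := congr1 (fun Z : fseq G => Z x) E; rewrite /= !concatE; lia.
Qed.

Lemma zero_pair V k : atom V -> lengths (concat (delta 0%R) V) k -> k = 2.
Proof.
move=> HV [s [<- Hs Es]].
have : 0 < concat_list s 0%R by rewrite Es concatE deltaE eqxx.
move=> /exists_mem [X Xs X0].
have [HX [Hr E]] := lengths_pick Hs Xs.
have EX := atom_zero HX X0.
rewrite Es EX in E; have := concat_cancel E => ER.
rewrite EX -ER in Hr; have := atom_lengths HV Hr.
by case: (s) Xs => // _ l _ /= ->.
Qed.

Lemma two_elems S : 2 <= seq_len S -> exists v w, subseqF (dd v w) S.
Proof.
move=> H; have [x Hx] := exists_pos (S := S) ltac:(lia).
have Hd := subseq_delta Hx.
have := seq_len_fsub Hd; rewrite seq_len_delta => L.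
have [y Hy] := exists_pos (S := fsub S (delta x)) ltac:(lia).
exists x, y => z; rewrite ddE; move: Hy; rewrite fsubE deltaE.
case: (eqVneq y x) => [->|nyx] Hy.
  by case: (eqVneq z x) => [->|nzx] /=; rewrite ?eqxx /=; lia.
case: (eqVneq z x) => [->|nzx]; first by rewrite eq_sym (negbTE nyx) /=; lia.
by case: (eqVneq z y) => [->|nzy] /=; lia.
Qed.

Lemma decomp s U V : concat_list s = concat U V ->
  exists ps : seq (fseq G * fseq G),
    [/\ map (fun p => concat p.1 p.2) ps = s,
        concat_list (map fst ps) = U & concat_list (map snd ps) = V].
Proof.
elim: s U V => [|W s IH] U V E.
  exists [::]; split => //=.
  + by apply: fext => x; have := congr1 (fun Z : fseq G => Z x) E;
       rewrite /= concat_list_nil concatE zfsE; lia.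
  + by apply: fext => x; have := congr1 (fun Z : fseq G => Z x) E;
       rewrite /= concat_list_nil concatE zfsE; lia.
set U1 : fseq G := [ffun x => minn (W x) (U x)].
set V1 : fseq G := [ffun x => W x - U1 x].
have Ep : concat_list s = concat (fsub U U1) (fsub V V1).
  apply: fext => x; have := congr1 (fun Z : fseq G => Z x) E.
  by rewrite /= concat_list_cons !concatE !fsubE /V1 /U1 !ffunE; lia.
have [ps [E1 E2 E3]] := IH _ _ Ep.
exists ((U1, V1) :: ps); split => /=.
- by rewrite E1; congr (_ :: _); apply: fext => x; rewrite concatE /V1 /U1 !ffunE; lia.
- apply: fext => x; rewrite concat_list_cons concatE E2 fsubE /U1 ffunE; lia.
- apply: fext => x; have := congr1 (fun Z : fseq G => Z x) E.
  rewrite /= !concat_list_cons !concatE E3 Ep !concatE !fsubE /V1 /U1 !ffunE.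
  lia.
Qed.

End Main.


Section Red.
Variable G : finZmodType.
Implicit Types S T U V W X Y A B R : fseq G.
Implicit Types s t : seq (fseq G).

Lemma stepV U V n s X v w : atom U -> atom V -> size s = n ->
  (forall Y, Y \in s -> atom Y) -> concat_list s = concat U V -> X \in s ->
  subseqF (dd v w) X -> subseqF (dd v w) V -> 4 <= n -> lowb (concat U V) n ->
  daleth_star G n.-1 \/
  [/\ atom (mrg V v w), lengths (concat U (mrg V v w)) n,
      lowb (concat U (mrg V v w)) n & seq_len (mrg V v w) < seq_len V].
Proof.
move=> HU HV Hn Hs Es Xs HDX HDV n4 Hl.
have HV' := merge_atom HV HDV.
have E : concat U (mrg V v w) = mrg (concat U V) v w.
  by rewrite concatC (concatC U V) merge_concat.
have Ln : lengths (concat U (mrg V v w)) n.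
  by rewrite E; apply: (lengths_merge Hn Hs Es Xs HDX).
have Lb := lowb_merge HU HV HDV Hl.
have slt : seq_len (mrg V v w) < seq_len V.
  rewrite seq_len_merge //; have := seq_len_le HDV; rewrite seq_len_dd; lia.
case: (classic (lengths (concat U (mrg V v w)) n.-1)) => [L1|nL1].
  by left; apply: (daleth_of HU HV' L1 _ Lb); lia.
right; split => // k Hk k2; have := Lb k Hk k2.
by case: (eqVneq k n.-1) => [e|ne]; [subst; contradiction | lia].
Qed.

Lemma len_const l : (forall X, X \in l -> seq_len X = 1) -> seq_len (concat_list l) = size l.
Proof.
elim: l => [|Y l IH] H; first by rewrite concat_list_nil seq_len_zfs.
rewrite concat_list_cons seq_len_concat H ?mem_head // IH //= => Z Zl.
by apply: H; rewrite inE Zl orbT.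
Qed.

Lemma atom3 (Z : fseq G) : zero_sum Z -> seq_len Z = 3 -> Z 0%R = 0 -> atom Z.
Proof.
move=> Zz Z3 Z0; split => //; first by rewrite Z3.
move=> R RZ R0 Rz; apply: NNPP => nRZ.
have lt := seq_len_lt RZ nRZ.
have ex1 : forall T, subseqF T Z -> seq_len T = 1 -> zero_sum T -> False.
  move=> T TZ T1 Tz; have [x Ex] := len1 T1; subst T.
  move: Tz; rewrite /zero_sum sigma_delta => x0; subst x.
  by have := TZ 0%R; rewrite deltaE eqxx Z0.
case: (eqVneq (seq_len R) 1) => [R1|nR1]; first exact: (ex1 R).
apply: (ex1 (fsub Z R)).
- by move=> x; rewrite fsubE; lia.
- by rewrite seq_len_fsub //; lia.
- by rewrite /zero_sum sigma_fsub // Zz Rz subrr.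
Qed.

Lemma cl_pair (ps : seq (fseq G * fseq G)) :
  concat_list [seq concat p.1 p.2 | p <- ps] =
  concat (concat_list (map fst ps)) (concat_list (map snd ps)).
Proof.
elim: ps => [|p ps IH] /=.
  by rewrite !concat_list_nil; apply: fext => x; rewrite concatE !zfsE.
by rewrite !concat_list_cons IH; apply: fext => x; rewrite !concatE; lia.
Qed.

Lemma caseB U V (ps : seq (fseq G * fseq G)) n :
  atom U -> atom V -> size ps = n -> 4 <= n ->
  (forall p, p \in ps -> atom (concat p.1 p.2)) ->
  (forall p, p \in ps -> seq_len p.1 = 1 /\ seq_len p.2 = 1) ->
  concat_list (map fst ps) = U -> concat_list (map snd ps) = V ->
  lowb (concat U V) n -> daleth_star G n.-1.
Proof.
move=> HU HV Hn n4 Hat H1 EU EV Hl.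
have LU : seq_len U = n.
  rewrite -EU len_const ?size_map // => X /mapP [p pps ->]; by case: (H1 p pps).
case: ps Hn Hat H1 EU EV => [|[U0 V0] [|[U1 V1] ps']] Hn Hat H1 EU EV; try (simpl in Hn; lia).
have [lU0 lV0] := H1 (U0, V0) (mem_head _ _); simpl in lU0, lV0.
have [lU1 lV1] : seq_len U1 = 1 /\ seq_len V1 = 1 by apply: (H1 (U1, V1)); rewrite !inE eqxx orbT.
have [u0 EU0] := len1 lU0; have [v0 EV0] := len1 lV0.
have [u1 EU1] := len1 lU1; have [v1 EV1] := len1 lV1.
subst U0 V0 U1 V1.
set rest := concat_list [seq concat p.1 p.2 | p <- ps'].
have EUV : concat U V = concat (concat (concat (delta u0) (delta v0)) (concat (delta u1) (delta v1))) rest.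
  apply: fext => x; rewrite -EU -EV /rest /= !concat_list_cons !concatE cl_pair concatE; lia.
set W01 := concat (concat (delta u0) (delta v0)) (concat (delta u1) (delta v1)).
have EUx : forall x, (x == u0) + (x == u1) <= U x.
  move=> x; rewrite -EU /= !concat_list_cons !concatE !deltaE; by rewrite addnA leq_addr.
have EVx : forall x, (x == v0) + (x == v1) <= V x.
  by move=> x; rewrite -EV /= !concat_list_cons !concatE !deltaE; by rewrite addnA leq_addr.
have Uz : 0 < U 0%R -> False.
  move=> H; have E := atom_zero HU H; move: LU; rewrite E seq_len_delta; lia.
have u00 : u0 != 0%R.
  apply/negP => /eqP e; subst u0; apply: Uz; have := EUx 0%R; rewrite eqxx; lia.
have u10 : u1 != 0%R.
  apply/negP => /eqP e; subst u1; apply: Uz; have := EUx 0%R; rewrite eqxx; lia.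
have u01 : (u0 + u1)%R != 0%R.
  apply/negP => /eqP e.
  have T := atom_min HU (T := dd u0 u1) (fun x => ltac:(rewrite ddE; exact: EUx x)).
  move: LU; rewrite -T ?seq_len_dd //; [lia | by rewrite /zero_sum sigma_dd].
have sW0 : (u0 + v0)%R = 0%R.
  by have := Hat _ (mem_head _ _); case => _ /=; rewrite /zero_sum sigma_concat !sigma_delta.
have sW1 : (u1 + v1)%R = 0%R.
  have : atom (concat (delta u1) (delta v1)) by apply: (Hat (delta u1, delta v1)); rewrite !inE eqxx orbT.
  by case => _; rewrite /zero_sum sigma_concat !sigma_delta.
have v01 : (v0 + v1)%R != 0%R.
  have ev0 : v0 = (- u0)%R by apply/eqP; rewrite -addr_eq0 addrC sW0 eqxx.
  have ev1 : v1 = (- u1)%R by apply/eqP; rewrite -addr_eq0 addrC sW1 eqxx.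
  by rewrite ev0 ev1 -opprD oppr_eq0.
have HDW : subseqF (dd v0 v1) W01 by move=> x; rewrite ddE /W01 !concatE !deltaE; lia.
have HDV : subseqF (dd v0 v1) V by move=> x; rewrite ddE; apply: EVx.
set Z := mrg W01 v0 v1.
have HZ : atom Z.
  apply: atom3.
  - rewrite /zero_sum /Z sigma_merge // /W01 !sigma_concat !sigma_delta.
    by rewrite sW0 add0r sW1.
  - by rewrite /Z seq_len_merge // /W01 !seq_len_concat !seq_len_delta.
  - rewrite /Z mrgE /W01 !concatE !deltaE.
    have f0 : (0%R == u0) = false by rewrite eq_sym (negbTE u00).
    have f1 : (0%R == u1) = false by rewrite eq_sym (negbTE u10).
    have f2 : (0%R == (v0 + v1)%R) = false by rewrite eq_sym (negbTE v01).
    by rewrite f0 f1 f2 /= !add0n addn0 subnn.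
have E : concat U (mrg V v0 v1) = concat Z rest.
  have E1 : concat U (mrg V v0 v1) = mrg (concat U V) v0 v1.
    by rewrite concatC (concatC U V) merge_concat.
  by rewrite E1 EUV merge_concat.
have Lr : lengths rest (size ps').
  exists [seq concat p.1 p.2 | p <- ps']; split => //; first by rewrite size_map.
  move=> Y /mapP [p pps ->]; apply: Hat; by rewrite !inE pps !orbT.
have Lb := lowb_merge HU HV HDV Hl.
have HV' := merge_atom HV HDV.
apply: (daleth_of HU HV') => //.
- have -> : n.-1 = 1 + size ps' by rewrite -Hn.
  by rewrite E; apply: lengths_cat => //; apply: lengths_atom.
- by lia.
Qed.

End Red.


Section Red2.
Variable G : finZmodType.
Implicit Types S T U V W X Y A B R : fseq G.
Implicit Types s t : seq (fseq G).

Lemma no_zero U V n : atom U -> atom V -> lengths (concat U V) n -> n <> 2 -> U 0%R = 0.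
Proof.
move=> HU HV Hn n2; case: (posnP (U 0%R)) => // H; exfalso.
by rewrite (atom_zero HU H) in Hn; apply: n2; apply: (zero_pair HV Hn).
Qed.

Lemma reduce N U V n : seq_len U + seq_len V <= N -> atom U -> atom V ->
  lengths (concat U V) n -> 4 <= n -> lowb (concat U V) n -> daleth_star G n.-1.
Proof.
elim: N U V n => [|N IH] U V n HN HU HV Hn n4 Hl.
  by exfalso; case: HU => HU _ _; apply: HU; lia.
have U0 := no_zero HU HV Hn ltac:(lia).
have V0 : V 0%R = 0.
  by apply: (no_zero (V := U) (n := n) HV HU); [rewrite concatC | lia].
have [s [Hsz Hs Es]] := Hn.
have [ps [E1 E2 E3]] := decomp Es.
case: (classic (exists p, p \in ps /\ 2 <= seq_len p.2)) => [[p [pps p2]]|nA].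
  have [v [w Hd]] := two_elems p2.
  have Xs : concat p.1 p.2 \in s by rewrite -E1; apply: (map_f (fun p => concat p.1 p.2)).
  have HDX : subseqF (dd v w) (concat p.1 p.2) by move=> x; rewrite concatE; have := Hd x; lia.
  have HDV : subseqF (dd v w) V.
    move=> x; have := Hd x; have := mem_le (map_f snd pps) x; rewrite E3; lia.
  case: (stepV HU HV Hsz Hs Es Xs HDX HDV n4 Hl) => // [[HV' Ln Lb lt]].
  by apply: (IH U (mrg V v w) n) => //; lia.
case: (classic (exists p, p \in ps /\ 2 <= seq_len p.1)) => [[p [pps p2]]|nB].
  have [v [w Hd]] := two_elems p2.
  have Xs : concat p.1 p.2 \in s by rewrite -E1; apply: (map_f (fun p => concat p.1 p.2)).
  have HDX : subseqF (dd v w) (concat p.1 p.2) by move=> x; rewrite concatE; have := Hd x; lia.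
  have HDU : subseqF (dd v w) U.
    move=> x; have := Hd x; have := mem_le (map_f fst pps) x; rewrite E2; lia.
  rewrite concatC in Es Hl.
  case: (stepV HV HU Hsz Hs Es Xs HDX HDU n4 Hl) => // [[HU' Ln Lb lt]].
  by apply: (IH V (mrg U v w) n) => //; lia.
apply: (caseB HU HV (ps := ps)) => //.
- by rewrite -Hsz -E1 size_map.
- by move=> p pps; apply: Hs; rewrite -E1; apply: (map_f (fun p => concat p.1 p.2)).
- move=> p pps.
  have Xs : concat p.1 p.2 \in s by rewrite -E1; apply: (map_f (fun p => concat p.1 p.2)).
  have HX := Hs _ Xs.
  have l1 : seq_len p.1 <= 1 by apply: NNPP => H; apply: nB; exists p; split => //; lia.
  have l2 : seq_len p.2 <= 1 by apply: NNPP => H; apply: nA; exists p; split => //; lia.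
  have X0 : concat p.1 p.2 0%R = 0.
    have := mem_le Xs 0%R; rewrite Es !concatE U0 V0; lia.
  have lX : seq_len (concat p.1 p.2) <> 1.
    move=> /len1 [x Ex]; case: HX => _ Xz _; move: Xz; rewrite Ex /zero_sum sigma_delta => x0.
    by move: X0; rewrite Ex x0 deltaE eqxx.
  case: HX => HX0 _ _; move: HX0 lX; rewrite seq_len_concat; lia.
Qed.

End Red2.


Lemma interval (P : nat -> Prop) M : (forall n, P n -> 3 <= n <= M) -> P 3 ->
  (forall n, 4 <= n -> P n -> P n.-1) ->
  exists b, 3 <= b /\ forall n, P n <-> 3 <= n <= b.
Proof.
elim: M => [|M IH] HB P3 Hd; first by have := HB 3 P3.
case: (classic (P M.+1)) => [PM|nPM].
  exists M.+1; split; first by have := HB _ PM; lia.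
  move=> n; split; first exact: HB.
  move=> /andP [n3 nM].
  have : forall d, 3 <= M.+1 - d -> P (M.+1 - d).
    elim=> [|d IHd] Hd3; first by rewrite subn0.
    have -> : M.+1 - d.+1 = (M.+1 - d).-1 by lia.
    apply: Hd; [lia | apply: IHd; lia].
  move=> /(_ (M.+1 - n)).
  have -> : M.+1 - (M.+1 - n) = n by lia.
  by apply; lia.
apply: IH => // n Pn; have := HB n Pn; case: (eqVneq n M.+1) => [e|ne]; first by subst.
lia.
Qed.

Section Fin.
Variable G : finZmodType.
Implicit Types S T U V W X Y A B R : fseq G.
Implicit Types s t : seq (fseq G).

Lemma daleth_ge3 n : daleth_star G n -> 3 <= n.
Proof. by move=> [U [V [HU HV _ [Hn n2 _]]]]; have := not01 HU HV Hn; lia. Qed.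

Lemma daleth_down n : 4 <= n -> daleth_star G n -> daleth_star G n.-1.
Proof.
move=> n4 [U [V [HU HV _ [Hn n2 Hl]]]].
exact: (@reduce G (seq_len U + seq_len V) U V n (leqnn _) HU HV Hn n4 Hl).
Qed.

Lemma ord_bound (g : G) : exists m, (0 < m <= #|G|)%N /\ (g *+ m = 0)%R.
Proof.
exists (#[g]%g); split.
  rewrite order_gt0 /=.
  have := order_dvdG (in_setT g). rewrite cardsT => /dvdn_leq; apply.
  by rewrite (cardD1 g).
exact: (expg_order g).
Qed.

Lemma atom_bound U : atom U -> seq_len U <= #|G| * #|G|.
Proof.
move=> HU.
have Hg : forall g, U g <= #|G|.
  move=> g; apply: NNPP => Hgt.
  have [m [/andP [m0 mG] gm]] := ord_bound g.
  set T : fseq G := [ffun x => (x == g) * m].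
  have TU : subseqF T U by move=> x; rewrite /T ffunE; case: eqP => [->|_]; lia.
  have T0 : seq_len T <> 0.
    by apply: (@len_pos _ T g); rewrite /T ffunE eqxx; lia.
  have Tz : zero_sum T.
    rewrite /zero_sum /sigma (bigD1 g) //= big1 ?addr0.
      by rewrite /T ffunE eqxx mul1n.
    by move=> x /negbTE nx; rewrite /T ffunE nx mul0n.
  have := atom_min HU TU T0 Tz => /(congr1 (fun Z : fseq G => Z g)).
  rewrite /T ffunE eqxx mul1n; lia.
rewrite /seq_len; have := @leq_sum _ (index_enum G) predT (fun g => U g) (fun _ => #|G|) (fun g _ => Hg g).
by rewrite sum_nat_const.
Qed.

End Fin.


Section Fin2.
Variable G : finZmodType.
Implicit Types S T U V W X Y A B R : fseq G.
Implicit Types s t : seq (fseq G).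

Lemma daleth_le n : daleth_star G n -> n <= 2 * (#|G| * #|G|).
Proof.
move=> [U [V [HU HV _ [Hn n2 _]]]]; have := lengths_le Hn.
rewrite seq_len_concat; have := atom_bound HU; have := atom_bound HV; lia.
Qed.

Lemma card3 (a b c : G) : a != b -> a != c -> b != c -> 3 <= #|G|.
Proof.
move=> ab ac bc.
have : #|[set a; b; c]| <= #|G| by apply: max_card.
rewrite setUC cardsU1 cards2 !inE ab eq_sym (negbTE ac) eq_sym (negbTE bc) /=.
done.
Qed.

Lemma small_elems (a x : G) : #|G| <= 2 -> a != 0%R -> x = 0%R \/ x = a.
Proof.
move=> H a0; apply: NNPP => N.
have x0 : x != 0%R by apply/eqP => e; apply: N; left.
have xa : x != a by apply/eqP => e; apply: N; right.
rewrite eq_sym in x0; rewrite eq_sym in xa; have := card3 a0 xa x0; lia.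
Qed.

Lemma atom_small W : #|G| <= 2 -> atom W -> W 0%R + seq_len W = 2.
Proof.
move=> HG HW; case: (posnP (W 0%R)) => [W0|Wp]; last first.
  by rewrite (atom_zero HW Wp) seq_len_delta deltaE eqxx.
have l1 : seq_len W <> 1.
  move=> /len1 [x Ex]; case: HW => _ Wz _; move: Wz; rewrite Ex /zero_sum sigma_delta => x0.
  by move: W0; rewrite Ex x0 deltaE eqxx.
have [a Wa] := exists_pos (S := W) ltac:(by case: HW).
have a0 : a != 0%R by apply/eqP => e; move: Wa; rewrite e W0.
have aa : (a + a = 0)%R.
  case: (small_elems (a + a)%R HG a0) => // e.
  have e' : (a + a = a + 0)%R by rewrite addr0 e.
  by move: a0; rewrite (addrI a e') eqxx.
have LW : seq_len W = W a + W 0%R.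
  rewrite /seq_len (bigD1 a) //= (bigD1 0%R) /=; last by rewrite eq_sym.
  rewrite big1 ?addn0 // => x /andP [xa x0].
  by case: (small_elems x HG a0) => e; [move: x0 | move: xa]; rewrite e eqxx.
have Hd : subseqF (dd a a) W.
  move=> x; rewrite ddE; case: (eqVneq x a) => [->|_] /=; last by [].
  case: HW => HW0 _ _; lia.
have E := atom_min HW Hd ltac:(by rewrite seq_len_dd) ltac:(by rewrite /zero_sum sigma_dd).
by rewrite -E seq_len_dd ddE eq_sym (negbTE a0).
Qed.

Lemma sum_small s : (forall W, W \in s -> W 0%R + seq_len W = 2) ->
  concat_list s 0%R + seq_len (concat_list s) = 2 * size s.
Proof.
elim: s => [|Y s IH] H; first by rewrite concat_list_nil zfsE seq_len_zfs.
rewrite concat_list_cons concatE seq_len_concat.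
have := H Y (mem_head _ _); have := IH (fun W Ws => H W (@mem_behead _ (Y :: s) W Ws)); simpl; lia.
Qed.

Lemma small_no n : #|G| <= 2 -> ~ daleth_star G n.
Proof.
move=> HG [U [V [HU HV [k1 [k2 [k12 [L1 L2]]]] _]]].
have key : forall k, lengths (concat U V) k -> k = 2.
  move=> k [s [<- Hs Es]].
  have := sum_small (fun W Ws => atom_small HG (Hs W Ws)); rewrite Es concatE seq_len_concat.
  have := atom_small HG HU; have := atom_small HG HV; lia.
by apply: k12; rewrite (key _ L1) (key _ L2).
Qed.

End Fin2.


Section Big.
Variable G : finZmodType.
Implicit Types S T U V W X Y A B R : fseq G.
Implicit Types s t : seq (fseq G).

Lemma cover2 (a : G) : (forall x, x = 0%R \/ x = a) -> #|G| <= 2.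
Proof.
move=> H; have : #|[set: G]| <= #|[set 0%R; a]|.
  apply: subset_leq_card; apply/subsetP => x _; rewrite !inE.
  by case: (H x) => ->; rewrite eqxx ?orbT.
by rewrite cardsT cards2 => H'; apply: leq_trans H' _; case: (_ != _).
Qed.

Lemma two_nonzero : 3 <= #|G| -> exists a b : G, [/\ a != 0%R, b != 0%R & a != b].
Proof.
move=> H3; apply: NNPP => N.
have [a a0] : exists a : G, a != 0%R.
  apply: NNPP => N2.
  have : #|G| <= 2.
    apply: (@cover2 0%R) => x; left; apply: NNPP => x0; apply: N2; exists x; apply/eqP; exact x0.
  lia.
have : #|G| <= 2.
  apply: (@cover2 a) => x; apply: NNPP => Nx; apply: N; exists a, x; split => //.
  - by apply/eqP => e; apply: Nx; left.
  - by apply/eqP => e; apply: Nx; right.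
lia.
Qed.

Lemma pair_atom (P : fseq G) : zero_sum P -> seq_len P = 2 -> P 0%R = 0 -> atom P.
Proof.
move=> Pz P2 P0; split => //; first by rewrite P2.
move=> R RP R0 Rz; apply: NNPP => nRP.
have lt := seq_len_lt RP nRP.
have R1 : seq_len R = 1 by lia.
have [x Ex] := len1 R1; subst R.
move: Rz; rewrite /zero_sum sigma_delta => x0; subst x.
by have := RP 0%R; rewrite deltaE eqxx P0.
Qed.

Lemma lowb_of U V m : atom U -> atom V -> m <= 3 -> lowb (concat U V) m.
Proof. by move=> HU HV m3 k Hk k2; have := not01 HU HV Hk; lia. Qed.

Lemma big3 : 3 <= #|G| -> daleth_star G 3.
Proof.
move=> H3.
case: (classic (exists g : G, (g + g)%R != 0%R)) => [[g gg]|N].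
  have g0 : g != 0%R by apply: contraNneq gg => ->; rewrite addr0.
  set h := (g + g)%R.
  have mh0 : (- h)%R != 0%R by rewrite oppr_eq0.
  have mg0 : (- g)%R != 0%R by rewrite oppr_eq0.
  set U := concat (dd g g) (delta (- h)%R).
  set V := concat (dd (- g)%R (- g)%R) (delta h).
  set P1 := dd g (- g)%R.
  set P2 := dd (- h)%R h.
  have f : forall y : G, y != 0%R -> (0%R == y) = false by move=> y /negbTE; rewrite eq_sym.
  have HU : atom U.
    apply: atom3.
    - by rewrite /zero_sum /U sigma_concat sigma_dd sigma_delta subrr.
    - by rewrite /U seq_len_concat seq_len_dd seq_len_delta.
    - by rewrite /U concatE ddE deltaE !f.
  have HV : atom V.
    apply: atom3.
    - by rewrite /zero_sum /V sigma_concat sigma_dd sigma_delta -opprD addNr.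
    - by rewrite /V seq_len_concat seq_len_dd seq_len_delta.
    - by rewrite /V concatE ddE deltaE !f.
  have HP1 : atom P1.
    apply: pair_atom.
    - by rewrite /zero_sum /P1 sigma_dd subrr.
    - by rewrite /P1 seq_len_dd.
    - by rewrite /P1 ddE !f.
  have HP2 : atom P2.
    apply: pair_atom.
    - by rewrite /zero_sum /P2 sigma_dd addNr.
    - by rewrite /P2 seq_len_dd.
    - by rewrite /P2 ddE !f.
  have L3 : lengths (concat U V) 3.
    exists [:: P1; P1; P2]; split => //.
      by move=> Y; rewrite !inE => /orP [/eqP ->|/orP [/eqP ->|/eqP ->]].
    apply: fext => x; rewrite !concat_list_cons concat_list_nil /U /V /P1 /P2.
    by rewrite !concatE ?ddE !deltaE zfsE; lia.
  by apply: (daleth_of HU HV L3) => //; apply: lowb_of.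
have gg : forall g : G, (g + g)%R = 0%R by move=> g; apply: NNPP => e; apply: N; exists g; apply/eqP.
have [a [b [a0 b0 ab]]] := two_nonzero H3.
set c := (a + b)%R.
have c0 : c != 0%R.
  apply/eqP => e.
  have e1 : a = (- b)%R by apply/eqP; rewrite -addr_eq0 -/c e.
  have e2 : (- b)%R = b by apply/eqP; rewrite eq_sym -addr_eq0 gg.
  by move: ab; rewrite e1 e2 eqxx.
have f : forall y : G, y != 0%R -> (0%R == y) = false by move=> y /negbTE; rewrite eq_sym.
set U := concat (dd a b) (delta c).
have HU : atom U.
  apply: atom3.
  - by rewrite /zero_sum /U sigma_concat sigma_dd sigma_delta -/c gg.
  - by rewrite /U seq_len_concat seq_len_dd seq_len_delta.
  - by rewrite /U concatE ddE deltaE !f.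
have HP : forall y : G, y != 0%R -> atom (dd y y).
  move=> y y0; apply: pair_atom.
  - by rewrite /zero_sum sigma_dd gg.
  - by rewrite seq_len_dd.
  - by rewrite ddE !f.
have L3 : lengths (concat U U) 3.
  exists [:: dd a a; dd b b; dd c c]; split => //.
    by move=> Y; rewrite !inE => /orP [/eqP ->|/orP [/eqP ->|/eqP ->]]; apply: HP.
  apply: fext => x; rewrite !concat_list_cons concat_list_nil /U.
  by rewrite !concatE ?ddE !deltaE zfsE; lia.
by apply: (daleth_of HU HU L3) => //; apply: lowb_of.
Qed.


End Big.


Theorem proposition3p3 (G : finZmodType) :
  ((forall n, ~ daleth_star G n) <-> (#|G| <= 2)%N) /\
  ((3 <= #|G|)%N ->
     exists b : nat, (3 <= b)%N /\
       forall n : nat, daleth_star G n <-> (3 <= n <= b)%N).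
Proof.
split.
  split => [H | HG n].
    rewrite leqNgt; apply/negP => H3; exact: (H 3 (big3 H3)).
  exact: small_no HG.
move=> H3; apply: (@interval (daleth_star G) (2 * (#|G| * #|G|))).
- by move=> n Pn; rewrite (daleth_ge3 Pn) (daleth_le Pn).
- exact: big3.
- exact: daleth_down.
Qed.
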